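(* Let $\nu\ge1$, $d:\mathbb{Z}^\nu\to\mathbb{C}$ bounded, $J=J_0+D$ on $\ell^2(\mathbb{Z}^\nu)$. Suppose that for some $j\in\{1,\dots,\nu\}$, $$\sup_{(k_1,\dots,k_{j-1},k_{j+1},\dots,k_\nu)\in\mathbb{Z}^{\nu-1}}\big|\Im\big(d(k_1,\dots,k_{j-1},n,k_{j+1},\dots,k_\nu)\big)\big|\to0$$ as $n\to+\infty$ (or as $n\to-\infty$). (For $\nu=1$ this means $\Im(d(n))\to0$ as $n\to+\infty$, or as $n\to-\infty$.) Then every boundary eigenvalue of $J$ is real.
   Context: $J_0$ is the discrete Laplacian on $\ell^2(\mathbb{Z}^\nu)$: $(J_0u)(k)=\sum_{l\in\mathbb{Z}^\nu:\|l\|_1=1}u(k+l)$, $\|l\|_1=\sum_j|l_j|$. $D$ is multiplication by $d$. The numerical range is $\operatorname{Num}(J)=\{\langle Ju,u\rangle:\|u\|=1\}$, and a boundary eigenvalue of $J$ is an eigenvalue of $J$ lying in the topological boundary of $\operatorname{Num}(J)$. *)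

(* Defs.v *)
From Stdlib Require Import Reals ZArith List.
Import ListNotations.
Open Scope R_scope.

Definition Cx : Type := (R * R)%type.
Definition Re (z : Cx) : R := fst z.
Definition Im (z : Cx) : R := snd z.
Definition C0 : Cx := (0, 0).
Definition Cadd (z w : Cx) : Cx := (Re z + Re w, Im z + Im w).
Definition Csub (z w : Cx) : Cx := (Re z - Re w, Im z - Im w).
Definition Cmul (z w : Cx) : Cx :=
  (Re z * Re w - Im z * Im w, Re z * Im w + Im z * Re w).
Definition Cconj (z : Cx) : Cx := (Re z, - Im z).
Definition Cmod (z : Cx) : R := sqrt (Re z * Re z + Im z * Im z).
Definition RtoC (r : R) : Cx := (r, 0).

Definition lattice (nu : nat) (k : list Z) : Prop := length k = nu.

(* k + delta * e_i  (i is 0-indexed) *)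
Definition shift (k : list Z) (i : nat) (delta : Z) : list Z :=
  firstn i k ++ (nth i k 0%Z + delta)%Z :: skipn (S i) k.

Definition lsum (f : list Z -> Cx) (F : list (list Z)) : Cx :=
  fold_right (fun k acc => Cadd (f k) acc) C0 F.

(* unconditional sum of f over the (countable) set S: the net of finite
   partial sums over finite subsets of S converges to s *)
Definition has_sum (S : list Z -> Prop) (f : list Z -> Cx) (s : Cx) : Prop :=
  forall eps : R, eps > 0 ->
    exists F0 : list (list Z), NoDup F0 /\ Forall S F0 /\
      forall F : list (list Z), NoDup F -> Forall S F -> incl F0 F ->
        Cmod (Csub (lsum f F) s) < eps.

Definition normsq_fun (u : list Z -> Cx) : list Z -> Cx :=
  fun k => RtoC (Cmod (u k) * Cmod (u k)).

Definition in_l2 (nu : nat) (u : list Z -> Cx) : Prop :=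
  exists s : Cx, has_sum (lattice nu) (normsq_fun u) s.

Definition inner (nu : nat) (v u : list Z -> Cx) (z : Cx) : Prop :=
  has_sum (lattice nu) (fun k => Cmul (v k) (Cconj (u k))) z.

(* (J0 u)(k) = sum_{l in Z^nu, ||l||_1 = 1} u(k + l) *)
Fixpoint J0_aux (u : list Z -> Cx) (k : list Z) (n : nat) : Cx :=
  match n with
  | O => C0
  | S m => Cadd (J0_aux u k m)
                (Cadd (u (shift k m 1%Z)) (u (shift k m (-1)%Z)))
  end.

Definition J0 (nu : nat) (u : list Z -> Cx) : list Z -> Cx :=
  fun k => J0_aux u k nu.

Definition Jop (nu : nat) (d : list Z -> Cx) (u : list Z -> Cx) : list Z -> Cx :=
  fun k => Cadd (J0 nu u k) (Cmul (d k) (u k)).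

Definition NumRange (nu : nat) (d : list Z -> Cx) (z : Cx) : Prop :=
  exists u : list Z -> Cx,
    has_sum (lattice nu) (normsq_fun u) (RtoC 1) /\
    inner nu (Jop nu d u) u z.

Definition is_eigenvalue (nu : nat) (d : list Z -> Cx) (lam : Cx) : Prop :=
  exists u : list Z -> Cx,
    in_l2 nu u /\ (exists k, lattice nu k /\ u k <> C0) /\
    forall k, lattice nu k -> Jop nu d u k = Cmul lam (u k).

Definition in_boundary (A : Cx -> Prop) (z : Cx) : Prop :=
  (forall eps : R, eps > 0 -> exists w, A w /\ Cmod (Csub w z) < eps) /\
  (forall eps : R, eps > 0 -> exists w, ~ A w /\ Cmod (Csub w z) < eps).

Definition is_boundary_eigenvalue (nu : nat) (d : list Z -> Cx) (lam : Cx) : Prop :=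
  is_eigenvalue nu d lam /\ in_boundary (NumRange nu d) lam.

(* Main.v *)
Require Import Defs.
From Stdlib Require Import Reals ZArith List Lra Lia Classical.
From Coquelicot Require Complex.
Import ListNotations.
Open Scope R_scope.

Lemma Cx_eq (z w : Cx) : Re z = Re w -> Im z = Im w -> z = w.
Proof. destruct z, w; unfold Re, Im; simpl; intros; subst; reflexivity. Qed.

Ltac cxeq := apply Cx_eq; unfold Cadd, Csub, Cmul, Cconj, RtoC, C0, Re, Im; simpl; ring.

Lemma Cmod_co (z : Cx) : Cmod z = Complex.Cmod z.
Proof. unfold Cmod, Complex.Cmod, Re, Im. f_equal. simpl. ring. Qed.

Lemma Cmod_tri (z w : Cx) : Cmod (Cadd z w) <= Cmod z + Cmod w.
Proof. rewrite !Cmod_co. apply Complex.Cmod_triangle. Qed.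

Lemma Cmod_mul (z w : Cx) : Cmod (Cmul z w) = Cmod z * Cmod w.
Proof. rewrite !Cmod_co. apply Complex.Cmod_mult. Qed.

Lemma Cmod_ge0 (z : Cx) : 0 <= Cmod z.
Proof. unfold Cmod. apply sqrt_pos. Qed.

Lemma Cmod_sq (z : Cx) : Cmod z * Cmod z = Re z * Re z + Im z * Im z.
Proof. unfold Cmod. apply sqrt_sqrt. nra. Qed.

Lemma Cmod_Re (z : Cx) : Rabs (Re z) <= Cmod z.
Proof.
  apply Rle_trans with (Rabs (Cmod z)); [|rewrite Rabs_pos_eq by apply Cmod_ge0; lra].
  apply Rsqr_le_abs_0. unfold Rsqr. rewrite Cmod_sq. nra.
Qed.

Lemma Cmod_Im (z : Cx) : Rabs (Im z) <= Cmod z.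
Proof.
  apply Rle_trans with (Rabs (Cmod z)); [|rewrite Rabs_pos_eq by apply Cmod_ge0; lra].
  apply Rsqr_le_abs_0. unfold Rsqr. rewrite Cmod_sq. nra.
Qed.

Lemma Cmod_0_iff (z : Cx) : Cmod z = 0 -> z = C0.
Proof.
  intro H. assert (Cmod z * Cmod z = 0) by (rewrite H; ring).
  rewrite Cmod_sq in H0. apply Cx_eq; unfold C0, Re, Im in *; simpl; nra.
Qed.

Lemma Cmod_pos (z : Cx) : z <> C0 -> 0 < Cmod z.
Proof.
  intro H. destruct (Cmod_ge0 z) as [|E]; auto. exfalso; apply H, Cmod_0_iff; auto.
Qed.

Lemma Cmod_RtoC (r : R) : Cmod (RtoC r) = Rabs r.
Proof. unfold Cmod, RtoC, Re, Im; simpl. rewrite Rmult_0_l, Rplus_0_r. apply sqrt_Rsqr_abs. Qed.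

Lemma Cmod_C0 : Cmod C0 = 0.
Proof. unfold Cmod, C0, Re, Im; simpl. rewrite Rmult_0_l, Rplus_0_r. apply sqrt_0. Qed.

Definition Ldec := list_eq_dec Z.eq_dec.

Lemma lsum_add f g F : lsum (fun k => Cadd (f k) (g k)) F = Cadd (lsum f F) (lsum g F).
Proof. induction F; simpl. cxeq. rewrite IHF. cxeq. Qed.

Lemma lsum_mul c f F : lsum (fun k => Cmul c (f k)) F = Cmul c (lsum f F).
Proof. induction F; simpl. cxeq. rewrite IHF. cxeq. Qed.

Lemma lsum_zero f F : (forall k, In k F -> f k = C0) -> lsum f F = C0.
Proof. induction F; simpl; intros H; auto. rewrite H, IHF by auto. cxeq. Qed.

Lemma lsum_single (S : list Z -> Prop) f F k0 :
  NoDup F -> Forall S F -> In k0 F -> (forall k, S k -> k <> k0 -> f k = C0) ->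
  lsum f F = f k0.
Proof.
  induction F as [|a F IH]; simpl; intros ND FS Hin Hz; [contradiction|].
  inversion ND; subst. inversion FS; subst.
  destruct (Ldec a k0) as [->|ne].
  - rewrite lsum_zero. cxeq. intros k Hk. apply Hz.
    + rewrite Forall_forall in H4; auto.
    + intros ->; contradiction.
  - destruct Hin as [->|Hin]; [contradiction|].
    rewrite Hz by auto. rewrite IH by auto. cxeq.
Qed.

Lemma has_sum_ext S f g s : (forall k, S k -> f k = g k) -> has_sum S f s -> has_sum S g s.
Proof.
  intros E H eps He. destruct (H eps He) as (F0 & N0 & S0 & HF).
  exists F0; split; [|split]; auto. intros F N FS I.
  replace (lsum g F) with (lsum f F). apply HF; auto.
  clear -E FS. induction F; simpl; auto. inversion FS; subst. rewrite E, IHF; auto.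
Qed.

Lemma has_sum_eq S f s t : s = t -> has_sum S f s -> has_sum S f t.
Proof. intros ->; auto. Qed.

Lemma has_sum_add S f g a b : has_sum S f a -> has_sum S g b ->
  has_sum S (fun k => Cadd (f k) (g k)) (Cadd a b).
Proof.
  intros Hf Hg eps He.
  destruct (Hf (eps/2)) as (F1 & N1 & S1 & H1); [lra|].
  destruct (Hg (eps/2)) as (F2 & N2 & S2 & H2); [lra|].
  exists (nodup Ldec (F1 ++ F2)). split; [apply NoDup_nodup|split].
  - rewrite Forall_forall in *. intros x Hx. apply nodup_In, in_app_or in Hx.
    destruct Hx; auto.
  - intros F N FS I. rewrite lsum_add.
    assert (I1 : incl F1 F). { intros x Hx; apply I, nodup_In, in_or_app; auto. }
    assert (I2 : incl F2 F). { intros x Hx; apply I, nodup_In, in_or_app; auto. }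
    specialize (H1 F N FS I1). specialize (H2 F N FS I2).
    replace (Csub (Cadd (lsum f F) (lsum g F)) (Cadd a b)) with
      (Cadd (Csub (lsum f F) a) (Csub (lsum g F) b)) by cxeq.
    eapply Rle_lt_trans; [apply Cmod_tri|]. lra.
Qed.

Lemma has_sum_mul S f c a : has_sum S f a -> has_sum S (fun k => Cmul c (f k)) (Cmul c a).
Proof.
  intros Hf eps He. pose proof (Cmod_ge0 c).
  destruct (Hf (eps / (Cmod c + 1))) as (F1 & N1 & S1 & H1).
  { apply Rdiv_lt_0_compat; lra. }
  exists F1; split; [|split]; auto. intros F N FS I. rewrite lsum_mul.
  replace (Csub (Cmul c (lsum f F)) (Cmul c a)) with (Cmul c (Csub (lsum f F) a)) by cxeq.
  rewrite Cmod_mul. specialize (H1 F N FS I).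
  assert (eps = (Cmod c + 1) * (eps / (Cmod c + 1))) by (field; lra).
  pose proof (Cmod_ge0 (Csub (lsum f F) a)).
  nra.
Qed.

Lemma has_sum_single (S : list Z -> Prop) f k0 :
  S k0 -> (forall k, S k -> k <> k0 -> f k = C0) -> has_sum S f (f k0).
Proof.
  intros Sk Hz eps He. exists [k0]. split; [constructor; [simpl; tauto|constructor]|split].
  - constructor; auto.
  - intros F N FS I. rewrite (lsum_single S f F k0); auto.
    + replace (Csub (f k0) (f k0)) with C0 by cxeq. rewrite Cmod_C0; lra.
    + apply I; simpl; auto.
Qed.

Lemma shift_len (k : list Z) i dl : (i < length k)%nat -> length (Defs.shift k i dl) = length k.
Proof.
  intro H. unfold Defs.shift. rewrite length_app, firstn_length_le by lia. cbn [length].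
  rewrite length_skipn. lia.
Qed.

Lemma nth_shift (k : list Z) (i : nat) (dl : Z) (m : nat) : (i < length k)%nat ->
  nth m (Defs.shift k i dl) 0%Z = if Nat.eq_dec m i then (nth i k 0 + dl)%Z else nth m k 0%Z.
Proof.
  intro H. unfold Defs.shift. destruct (Nat.eq_dec m i) as [->|ne].
  - rewrite app_nth2; rewrite firstn_length_le by lia; [|lia].
    rewrite Nat.sub_diag. reflexivity.
  - destruct (Nat.lt_ge_cases m i).
    + rewrite app_nth1 by (rewrite firstn_length_le; lia).
      rewrite nth_firstn. destruct (Nat.ltb_spec m i); [reflexivity|lia].
    + rewrite app_nth2 by (rewrite firstn_length_le; lia).
      rewrite firstn_length_le by lia.
      replace (m - i)%nat with (S (m - S i)) by lia. cbn [nth].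
      rewrite nth_skipn. f_equal. lia.
Qed.

Lemma shift_lattice nu k i dl : (i < nu)%nat -> lattice nu k -> lattice nu (Defs.shift k i dl).
Proof. unfold lattice; intros; subst. apply shift_len; auto. Qed.

Lemma shift_shift k i a b : (i < length k)%nat -> Defs.shift (Defs.shift k i a) i b = Defs.shift k i (a + b).
Proof.
  intro H. apply nth_ext with (d:=0%Z) (d':=0%Z).
  - rewrite !shift_len; auto. rewrite shift_len; auto.
  - intros n Hn. rewrite !nth_shift; try rewrite shift_len; auto.
    destruct (Nat.eq_dec n i); subst; auto.
    destruct (Nat.eq_dec i i); [lia|congruence].
Qed.

Lemma shift_zero k i : (i < length k)%nat -> Defs.shift k i 0 = k.
Proof.
  intro H. apply nth_ext with (d:=0%Z) (d':=0%Z).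
  - rewrite shift_len; auto.
  - intros n Hn. rewrite nth_shift; auto. destruct (Nat.eq_dec n i); subst; lia.
Qed.

Lemma shift_neq k i dl : (i < length k)%nat -> dl <> 0%Z -> Defs.shift k i dl <> k.
Proof.
  intros H Hd E. assert (nth i (Defs.shift k i dl) 0%Z = nth i k 0%Z) by (rewrite E; auto).
  rewrite nth_shift in H0 by auto. destruct (Nat.eq_dec i i); lia.
Qed.

Lemma J0_aux_one u k n j s :
  (forall m, (m < n)%nat -> m <> j -> u (Defs.shift k m 1%Z) = C0 /\ u (Defs.shift k m (-1)%Z) = C0) ->
  (s = 1%Z \/ s = (-1)%Z) ->
  ((j < n)%nat -> u (Defs.shift k j s) = C0) ->
  J0_aux u k n = if lt_dec j n then u (Defs.shift k j (- s)%Z) else C0.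
Proof.
  induction n; intros Hm Hs Hj; simpl.
  - reflexivity.
  - rewrite IHn; [| intros m Hm' ne; apply Hm; auto | auto | intros; apply Hj; auto].
    destruct (Nat.eq_dec n j) as [->|ne].
    + destruct (lt_dec j j); [lia|]. destruct (lt_dec j (S j)); [|lia].
      specialize (Hj (Nat.lt_succ_diag_r j)).
      destruct Hs as [ -> | -> ]; simpl in *; rewrite Hj; cxeq.
    + destruct (Hm n (Nat.lt_succ_diag_r n) ne) as [-> ->].
      destruct (lt_dec j n); destruct (lt_dec j (S n)); try lia; cxeq.
Qed.

Lemma unique_cont nu d lam u j s N :
  (j < nu)%nat -> (s = 1%Z \/ s = (-1)%Z) ->
  (forall k, lattice nu k -> Jop nu d u k = Cmul lam (u k)) ->
  (forall k, lattice nu k -> (N <= s * nth j k 0)%Z -> u k = C0) ->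
  forall k, lattice nu k -> u k = C0.
Proof.
  intros Hj Hs Heig Hz.
  assert (Cl : forall t : nat, forall k, lattice nu k ->
            (N - Z.of_nat t <= s * nth j k 0)%Z -> u k = C0).
  { induction t; intros k Lk Hk.
    - apply Hz; auto. lia.
    - destruct (Z_le_gt_dec (N - Z.of_nat t) (s * nth j k 0)%Z) as [le|gt].
      + apply IHt; auto.
      + assert (Lk' : lattice nu (Defs.shift k j s)) by (apply shift_lattice; auto).
        assert (Ljk : (j < length k)%nat) by (unfold lattice in Lk; lia).
        assert (Kj : (s * nth j (Defs.shift k j s) 0 = s * nth j k 0 + 1)%Z).
        { rewrite nth_shift by auto. destruct (Nat.eq_dec j j); [|congruence].
          destruct Hs; subst; lia. }
        assert (U' : u (Defs.shift k j s) = C0) by (apply IHt; auto; lia).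
        pose proof (Heig _ Lk') as E. unfold Jop in E. rewrite U' in E.
        assert (J0z : J0 nu u (Defs.shift k j s) = C0).
        { revert E. generalize (J0 nu u (Defs.shift k j s)). intros c E.
          replace c with (Cadd c (Cmul (d (Defs.shift k j s)) C0)) by cxeq. rewrite E. cxeq. }
        unfold J0 in J0z.
        rewrite (J0_aux_one u (Defs.shift k j s) nu j s) in J0z; auto.
        * destruct (lt_dec j nu); [|lia].
          rewrite shift_shift in J0z by auto.
          replace (s + - s)%Z with 0%Z in J0z by lia. rewrite shift_zero in J0z; auto.
        * intros m Hm ne. split; apply IHt; try (apply shift_lattice; auto);
            rewrite nth_shift by (rewrite shift_len; unfold lattice in Lk; lia);
            destruct (Nat.eq_dec j m); try congruence; lia.
        * intros _. apply IHt. apply shift_lattice; auto.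
          rewrite nth_shift by (rewrite shift_len; unfold lattice in Lk; lia).
          destruct (Nat.eq_dec j j); [|congruence]. destruct Hs; subst; lia. }
  intros k Lk. apply (Cl (Z.to_nat (N - s * nth j k 0%Z))); auto. lia.
Qed.

Lemma J0_aux_lin (f g : list Z -> Cx) a b k n :
  J0_aux (fun k => Cadd (Cmul a (f k)) (Cmul b (g k))) k n =
  Cadd (Cmul a (J0_aux f k n)) (Cmul b (J0_aux g k n)).
Proof. induction n; simpl. cxeq. rewrite IHn. cxeq. Qed.

Lemma Jop_lin nu d (f g : list Z -> Cx) a b k :
  Jop nu d (fun k => Cadd (Cmul a (f k)) (Cmul b (g k))) k =
  Cadd (Cmul a (Jop nu d f k)) (Cmul b (Jop nu d g k)).
Proof. unfold Jop, J0. rewrite J0_aux_lin. cxeq. Qed.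

Definition ind (k0 : list Z) : list Z -> Cx := fun k => if Ldec k k0 then (1, 0) else C0.

Fixpoint Nb (g : list Z -> Cx) (k0 : list Z) (n : nat) : Cx :=
  match n with
  | O => C0
  | S m => Cadd (Nb g k0 m) (Cadd (g (Defs.shift k0 m (-1)%Z)) (g (Defs.shift k0 m 1%Z)))
  end.

Lemma single_shift nu k0 m dl (g : list Z -> Cx) : (m < nu)%nat -> lattice nu k0 ->
  has_sum (lattice nu) (fun k => Cmul (ind k0 (Defs.shift k m dl)) (g k))
    (g (Defs.shift k0 m (- dl)%Z)).
Proof.
  intros Hm L0.
  set (k1 := Defs.shift k0 m (- dl)%Z).
  assert (L1 : lattice nu k1) by (apply shift_lattice; auto).
  assert (E1 : Defs.shift k1 m dl = k0).
  { unfold k1. rewrite shift_shift by (unfold lattice in L0; lia).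
    replace (- dl + dl)%Z with 0%Z by lia. apply shift_zero; unfold lattice in L0; lia. }
  eapply has_sum_eq; [|apply (has_sum_single _ _ k1); auto].
  - simpl. rewrite E1. unfold ind. destruct (Ldec k0 k0); [|congruence]. cxeq.
  - intros k Lk ne. unfold ind. destruct (Ldec (Defs.shift k m dl) k0) as [E|]; [|cxeq].
    exfalso. apply ne. unfold k1. rewrite <- E.
    rewrite shift_shift by (unfold lattice in Lk; lia).
    replace (dl + - dl)%Z with 0%Z by lia. symmetry; apply shift_zero; unfold lattice in Lk; lia.
Qed.

Lemma neighbor_sum nu k0 (g : list Z -> Cx) n : (n <= nu)%nat -> lattice nu k0 ->
  has_sum (lattice nu) (fun k => Cmul (J0_aux (ind k0) k n) (g k)) (Nb g k0 n).
Proof.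
  intros Hn L0. induction n.
  - simpl. apply has_sum_ext with (f := fun _ => C0).
    + intros; cxeq.
    + apply (has_sum_single (lattice nu) (fun _ => C0) k0); auto.
  - simpl. eapply has_sum_ext.
    2:{ apply has_sum_add; [apply IHn; lia|].
        apply has_sum_add; [apply (single_shift nu k0 n 1%Z g)|apply (single_shift nu k0 n (-1)%Z g)];
        auto; lia. }
    intros k _. simpl. cxeq.
Qed.

Lemma J0_ind_self nu k0 n : (n <= nu)%nat -> lattice nu k0 -> J0_aux (ind k0) k0 n = C0.
Proof.
  intros Hn L0. induction n; simpl; auto.
  rewrite IHn by lia. unfold ind.
  destruct (Ldec (Defs.shift k0 n 1%Z) k0) as [E|].
  { exfalso; apply (shift_neq k0 n 1%Z); [unfold lattice in L0; lia | lia | exact E]. }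
  destruct (Ldec (Defs.shift k0 n (-1)%Z) k0) as [E|].
  { exfalso; apply (shift_neq k0 n (-1)%Z); [unfold lattice in L0; lia | lia | exact E]. }
  cxeq.
Qed.

Lemma lsum_nonneg (u : list Z -> Cx) F k0 :
  Im (lsum (normsq_fun u) F) = 0 /\ 0 <= Re (lsum (normsq_fun u) F) /\
  (In k0 F -> Cmod (u k0) * Cmod (u k0) <= Re (lsum (normsq_fun u) F)).
Proof.
  induction F as [|a F IH]; simpl.
  - unfold C0, Re, Im; simpl; repeat split; try lra; tauto.
  - destruct IH as (H1 & H2 & H3). unfold normsq_fun, Cadd, RtoC, Re, Im in *; simpl in *.
    pose proof (Cmod_ge0 (u a)). pose proof (Cmod_ge0 (u k0)).
    repeat split; try nra.
    intros [->|Hin]; [nra|]. specialize (H3 Hin). nra.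
Qed.


Lemma close_parts (L s : Cx) eps : Cmod (Csub L s) < eps ->
  Re L - eps < Re s /\ Im L - eps < Im s /\ Im s < Im L + eps.
Proof.
  intro H. pose proof (Cmod_Re (Csub L s)). pose proof (Cmod_Im (Csub L s)).
  unfold Csub, Re, Im in *; simpl in *.
  pose proof (Rle_abs (fst L - fst s)). pose proof (Rle_abs (snd L - snd s)).
  pose proof (Rle_abs (-(snd L - snd s))). rewrite Rabs_Ropp in H4. lra.
Qed.

Lemma sum_pos S (u : list Z -> Cx) s k0 : has_sum S (normsq_fun u) s -> S k0 ->
  Im s = 0 /\ Cmod (u k0) * Cmod (u k0) <= Re s.
Proof.
  intros H Sk.
  assert (Key : forall eps, eps > 0 -> Rabs (Im s) < eps /\ Cmod (u k0) * Cmod (u k0) - eps < Re s).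
  { intros eps He. destruct (H eps He) as (F0 & N0 & S0 & HF).
    destruct (in_dec Ldec k0 F0) as [i|ni].
    - specialize (HF F0 N0 S0 (incl_refl _)).
      destruct (lsum_nonneg u F0 k0) as (A1 & A2 & A3). specialize (A3 i).
      apply close_parts in HF. unfold Re, Im in *.
      split; [apply Rabs_def1|]; lra.
    - specialize (HF (k0 :: F0)). destruct (lsum_nonneg u (k0 :: F0) k0) as (A1 & A2 & A3).
      specialize (A3 (or_introl eq_refl)).
      assert (HF' : Cmod (Csub (lsum (normsq_fun u) (k0 :: F0)) s) < eps).
      { apply HF; [constructor; auto|constructor; auto|intros x Hx; simpl; auto]. }
      apply close_parts in HF'. unfold Re, Im in *.
      split; [apply Rabs_def1|]; lra. }
  split.
  - destruct (Req_dec (Im s) 0) as [|ne]; auto. exfalso.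
    destruct (Key (Rabs (Im s))) as [K _]. { apply Rabs_pos_lt; auto. } lra.
  - destruct (Rle_dec (Cmod (u k0) * Cmod (u k0)) (Re s)) as [|nle]; auto. exfalso.
    destruct (Key (Cmod (u k0) * Cmod (u k0) - Re s)) as [_ K]; lra.
Qed.

Lemma fixpt (w e : Cx) (A : R) : A > 0 -> 4 * Cmod w * Cmod e < A * A ->
  exists r, 0 <= r /\ Cmod (Cadd w (Cmul (RtoC (r * r)) e)) = A * r.
Proof.
  intros HA Hb.
  destruct (Req_dec (Cmod w) 0) as [E|NE].
  - exists 0. split; [lra|]. apply Cmod_0_iff in E. subst.
    replace (Cadd C0 (Cmul (RtoC (0 * 0)) e)) with C0 by cxeq. rewrite Cmod_C0. ring.
  - pose proof (Cmod_ge0 w). pose proof (Cmod_ge0 e).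
    set (f := fun r => A * r - Cmod (Cadd w (Cmul (RtoC (r * r)) e))).
    assert (Cf : continuity f).
    { intro x. unfold f, Cmod, Cadd, Cmul, RtoC, Re, Im; simpl. reg.
      apply Rplus_le_le_0_compat; apply Rle_0_sqr. }
    set (r0 := 2 * Cmod w / A).
    assert (r0p : 0 < r0) by (unfold r0; apply Rdiv_lt_0_compat; lra).
    assert (F0 : f 0 < 0).
    { unfold f. replace (Cadd w (Cmul (RtoC (0 * 0)) e)) with w by cxeq. lra. }
    assert (F1 : 0 < f r0).
    { unfold f. pose proof (Cmod_tri w (Cmul (RtoC (r0 * r0)) e)).
      rewrite Cmod_mul, Cmod_RtoC, Rabs_pos_eq in H1 by nra.
      assert (A * r0 = 2 * Cmod w) by (unfold r0; field; lra).
      assert (r0 * r0 * Cmod e < Cmod w).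
      { unfold r0. replace (2 * Cmod w / A * (2 * Cmod w / A) * Cmod e) with
          (Cmod w * ((4 * Cmod w * Cmod e) / (A * A))) by (field; lra).
        assert (4 * Cmod w * Cmod e / (A * A) < 1).
        { apply (Rmult_lt_reg_r (A * A)); [nra|]. unfold Rdiv. rewrite Rmult_assoc, Rinv_l by nra. lra. }
        nra. }
      lra. }
    destruct (IVT f 0 r0 Cf r0p F0 F1) as (r & Hr & Fr).
    exists r. split; [lra|]. unfold f in Fr. lra.
Qed.

Lemma ind_self k0 : ind k0 k0 = (1, 0).
Proof. unfold ind. destruct (Ldec k0 k0); congruence. Qed.

Lemma ind_other k0 k : k <> k0 -> ind k0 k = C0.
Proof. intro. unfold ind. destruct (Ldec k k0); congruence. Qed.

Lemma member nu d lam u k0 (q : Cx) (t : R) :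
  lattice nu k0 ->
  has_sum (lattice nu) (normsq_fun u) (RtoC 1) ->
  (forall k, lattice nu k -> Jop nu d u k = Cmul lam (u k)) ->
  t * t * (1 + (Re q * Re q + Im q * Im q) * (1 - (Re (u k0) * Re (u k0) + Im (u k0) * Im (u k0)))) = 1 ->
  NumRange nu d (Cmul (RtoC (t*t)) (Cadd lam (Cadd
     (Cmul q (Csub (Cadd (Nb (fun k => Cconj (u k)) k0 nu) (Cmul (d k0) (Cconj (u k0))))
                   (Cmul lam (Cconj (u k0)))))
     (Cmul (RtoC (Re q * Re q + Im q * Im q))
        (Csub (Jop nu d (ind k0) k0)
              (Cmul (u k0) (Cadd (Nb (fun k => Cconj (u k)) k0 nu) (Cmul (d k0) (Cconj (u k0)))))))))).
Proof.
  intros L0 Hu Heig Ht.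
  set (A := Cadd (Nb (fun k => Cconj (u k)) k0 nu) (Cmul (d k0) (Cconj (u k0)))).
  set (B := Jop nu d (ind k0) k0).
  set (al := Cmul (RtoC t) (Csub (RtoC 1) (Cmul q (Cconj (u k0))))).
  set (be := Cmul (RtoC t) q).
  set (na := Re al * Re al + Im al * Im al).
  set (x := fun k => Cadd (Cmul al (u k)) (Cmul be (ind k0 k))).
  exists x. split.
  - set (r := fun k => Csub (normsq_fun x k) (Cmul (RtoC na) (normsq_fun u k))).
    apply has_sum_eq with (Cadd (Cmul (RtoC na) (RtoC 1)) (r k0)).
    { unfold r, normsq_fun, x. rewrite ind_self, !Cmod_sq.
      apply Cx_eq; unfold na, al, be, Cadd, Csub, Cmul, Cconj, RtoC, Re, Im in *; simpl in *.
      - match type of Ht with ?L = 1 => transitivity L; [ring|exact Ht] end.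
      - ring. }
    apply has_sum_ext with (f := fun k => Cadd (Cmul (RtoC na) (normsq_fun u k)) (r k)).
    { intros k _. unfold r. cxeq. }
    apply has_sum_add; [apply has_sum_mul; auto|].
    apply has_sum_single; auto.
    intros k Lk ne. unfold r, normsq_fun, x. rewrite ind_other by auto.
    replace (Cadd (Cmul al (u k)) (Cmul be C0)) with (Cmul al (u k)) by cxeq.
    rewrite Cmod_mul. unfold na. rewrite <- Cmod_sq. cxeq.
  - unfold inner.
    set (J := fun k => Jop nu d (ind k0) k).
    apply has_sum_ext with (f := fun k =>
      Cadd (Cmul (Cmul (RtoC na) lam) (normsq_fun u k))
      (Cadd (Cmul (Cmul al (Cmul lam (Cconj be))) (Cmul (u k) (ind k0 k)))
      (Cadd (Cmul (Cmul be (Cconj al)) (Cmul (J k) (Cconj (u k))))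
            (Cmul (Cmul be (Cconj be)) (Cmul (J k) (ind k0 k)))))).
    { intros k Lk. unfold x. rewrite Jop_lin, Heig by auto. fold (J k).
      unfold normsq_fun. rewrite Cmod_sq.
      destruct (Ldec k k0) as [->|ne].
      - rewrite ind_self. unfold na. cxeq.
      - rewrite ind_other by auto. unfold na. cxeq. }
    apply has_sum_eq with (Cadd (Cmul (Cmul (RtoC na) lam) (RtoC 1))
      (Cadd (Cmul (Cmul al (Cmul lam (Cconj be))) (Cmul (u k0) (ind k0 k0)))
      (Cadd (Cmul (Cmul be (Cconj al)) A)
            (Cmul (Cmul be (Cconj be)) (Cmul (J k0) (ind k0 k0)))))).
    { fold B. unfold J. fold B. rewrite ind_self.
      apply Cx_eq; unfold na, al, be, Cadd, Csub, Cmul, Cconj, RtoC, Re, Im in *; simpl in *; ring. }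
    apply has_sum_add; [apply has_sum_mul; auto|].
    apply has_sum_add.
    { apply has_sum_mul with (f := fun k => Cmul (u k) (ind k0 k)).
      apply (has_sum_single _ (fun k => Cmul (u k) (ind k0 k))); auto.
      intros k Lk ne. rewrite ind_other by auto. cxeq. }
    apply has_sum_add.
    { apply has_sum_mul.
      apply has_sum_ext with (f := fun k =>
        Cadd (Cmul (J0_aux (ind k0) k nu) (Cconj (u k)))
             (Cmul (d k) (Cmul (ind k0 k) (Cconj (u k))))).
      { intros k _. unfold J, Jop, J0. cxeq. }
      unfold A. apply has_sum_eq with (Cadd (Nb (fun k => Cconj (u k)) k0 nu)
          (Cmul (d k0) (Cmul (ind k0 k0) (Cconj (u k0))))).
      { rewrite ind_self. cxeq. }
      apply has_sum_add; [apply neighbor_sum; auto|].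
      apply (has_sum_single _ (fun k => Cmul (d k) (Cmul (ind k0 k) (Cconj (u k))))); auto.
      intros k Lk ne. rewrite ind_other by auto. cxeq. }
    apply has_sum_mul with (f := fun k => Cmul (J k) (ind k0 k)).
    apply (has_sum_single _ (fun k => Cmul (J k) (ind k0 k))); auto.
    intros k Lk ne. rewrite ind_other by auto. cxeq.
Qed.

Lemma Nb_conj (u : list Z -> Cx) k0 n : Nb (fun k => Cconj (u k)) k0 n = Cconj (J0_aux u k0 n).
Proof. induction n; simpl. cxeq. rewrite IHn. cxeq. Qed.

Lemma Cmod_conj z : Cmod (Cconj z) = Cmod z.
Proof. unfold Cmod, Cconj, Re, Im; simpl. f_equal. ring. Qed.

Lemma Cmod_sub_le (x y : Cx) : Cmod (Csub x y) <= Cmod x + Cmod y.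
Proof.
  replace (Csub x y) with (Cadd x (Cmul (RtoC (-1)) y)) by cxeq.
  eapply Rle_trans; [apply Cmod_tri|]. rewrite Cmod_mul, Cmod_RtoC.
  assert (Rabs (-1) = 1) by (unfold Rabs; destruct Rcase_abs; lra). rewrite H. lra.
Qed.

Lemma interior nu d lam u k0 :
  lattice nu k0 ->
  has_sum (lattice nu) (normsq_fun u) (RtoC 1) ->
  (forall k, lattice nu k -> Jop nu d u k = Cmul lam (u k)) ->
  u k0 <> C0 -> Im (d k0) <> Im lam ->
  exists eps0, eps0 > 0 /\ forall w, Cmod (Csub w lam) < eps0 -> NumRange nu d w.
Proof.
  intros L0 Hu Heig U0 Hd.
  destruct (sum_pos _ u _ k0 Hu L0) as [_ Hn0]. unfold RtoC, Re in Hn0; simpl in Hn0.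
  rewrite Cmod_sq in Hn0.
  set (u0 := u k0) in *.
  set (n0 := Re u0 * Re u0 + Im u0 * Im u0) in *.
  assert (n0p : 0 <= n0) by (unfold n0; nra).
  set (s := 1 - n0).
  set (A := Cadd (Nb (fun k => Cconj (u k)) k0 nu) (Cmul (d k0) (Cconj u0))).
  set (B := Jop nu d (ind k0) k0).
  set (a := Csub A (Cmul lam (Cconj u0))).
  set (c := Csub B (Cmul u0 A)).
  set (c' := Csub c (Cmul lam (RtoC s))).
  assert (Ea : a = Cmul (Cconj u0) (0, 2 * (Im (d k0) - Im lam))).
  { pose proof (Heig k0 L0) as E. unfold Jop, J0 in E. fold u0 in E.
    unfold a, A. rewrite Nb_conj.
    revert E. generalize (J0_aux u k0 nu). intros J E.
    assert (EJ : J = Csub (Cmul lam u0) (Cmul (d k0) u0)).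
    { rewrite <- E. cxeq. }
    rewrite EJ. cxeq. }
  assert (ap : 0 < Cmod a).
  { rewrite Ea, Cmod_mul, Cmod_conj. apply Rmult_lt_0_compat.
    - apply Cmod_pos; auto.
    - apply Cmod_pos. intro E. inversion E. apply Hd. lra. }
  pose proof (Cmod_ge0 c').
  set (na := Cmod a * Cmod a).
  assert (nap : 0 < na) by (unfold na; nra).
  exists (Rmin 1 (na / (4 * (1 + Cmod c')))). split.
  { apply Rmin_pos; [lra|]. apply Rdiv_lt_0_compat; lra. }
  intros w Hw.
  set (om := Csub w lam) in *.
  pose proof (Rmin_l 1 (na / (4 * (1 + Cmod c')))).
  pose proof (Rmin_r 1 (na / (4 * (1 + Cmod c')))).
  set (e := Csub (Cmul om (RtoC s)) c').
  pose proof (Cmod_ge0 om).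
  assert (He : Cmod e <= 1 + Cmod c').
  { eapply Rle_trans; [apply Cmod_sub_le|]. rewrite Cmod_mul, Cmod_RtoC.
    rewrite Rabs_pos_eq by (unfold s; lra).
    assert (s <= 1) by (unfold s; lra). assert (0 <= s) by (unfold s; lra). nra. }
  assert (Hb : 4 * Cmod om * Cmod e < Cmod a * Cmod a).
  { fold na. pose proof (Cmod_ge0 e).
    assert (Cmod om * (4 * (1 + Cmod c')) < na).
    { assert (Hlt : Cmod om < na / (4 * (1 + Cmod c'))) by lra.
      apply (Rmult_lt_compat_r (4 * (1 + Cmod c'))) in Hlt; [|lra].
      unfold Rdiv in Hlt. rewrite Rmult_assoc, Rinv_l in Hlt by lra. lra. }
    nra. }
  destruct (fixpt om e (Cmod a) ap Hb) as (r & r0 & Hr).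
  set (q := Cmul (Cadd om (Cmul (RtoC (r * r)) e)) (Cmul (Cconj a) (RtoC (1 / na)))).
  assert (Hqa : Cmul q a = Cadd om (Cmul (RtoC (r * r)) e)).
  { unfold q, na. rewrite Cmod_sq.
    assert (Re a * Re a + Im a * Im a <> 0) by (rewrite <- Cmod_sq; fold na; lra).
    apply Cx_eq; unfold Cadd, Cmul, Cconj, RtoC, Re, Im in *; simpl; field; auto. }
  assert (Hq : Cmod q = r).
  { unfold q. rewrite !Cmod_mul, Hr, Cmod_conj, Cmod_RtoC.
    rewrite Rabs_pos_eq by (unfold Rdiv; apply Rmult_le_pos; [lra|left; apply Rinv_0_lt_compat; lra]).
    unfold na. field. lra. }
  assert (Hnq : Re q * Re q + Im q * Im q = r * r) by (rewrite <- Cmod_sq, Hq; ring).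
  assert (Ds : 0 < 1 + r * r * s) by (unfold s; nra).
  set (t := 1 / sqrt (1 + r * r * s)).
  assert (Htt : t * t = / (1 + r * r * s)).
  { unfold t. unfold Rdiv. rewrite !Rmult_1_l. rewrite <- Rinv_mult.
    rewrite sqrt_sqrt by lra. reflexivity. }
  assert (Ht : t * t * (1 + (Re q * Re q + Im q * Im q) * (1 - n0)) = 1).
  { rewrite Hnq, Htt. fold s. field. lra. }
  pose proof (member nu d lam u k0 q t L0 Hu Heig Ht) as M.
  fold u0 A B in M. fold a c in M.
  replace w with (Cmul (RtoC (t * t)) (Cadd lam (Cadd (Cmul q a)
     (Cmul (RtoC (Re q * Re q + Im q * Im q)) c)))); auto.
  rewrite Hqa, Hnq, Htt. unfold e, c'. unfold om.
  apply Cx_eq; unfold Cadd, Csub, Cmul, Cconj, RtoC, Re, Im in *; simpl; field; lra.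
Qed.

Theorem mainTheorem6 (nu : nat) (d : list Z -> Cx)
  (Hnu : (1 <= nu)%nat)
  (Hbdd : exists M : R, forall k, lattice nu k -> Cmod (d k) <= M)
  (Hdecay : exists j : nat, (j < nu)%nat /\
     ((forall eps : R, eps > 0 -> exists N : Z, forall n : Z, (N <= n)%Z ->
         forall k, lattice nu k -> nth j k 0%Z = n -> Rabs (Im (d k)) <= eps)
      \/
      (forall eps : R, eps > 0 -> exists N : Z, forall n : Z, (n <= N)%Z ->
         forall k, lattice nu k -> nth j k 0%Z = n -> Rabs (Im (d k)) <= eps)))
  : forall lam : Cx, is_boundary_eigenvalue nu d lam -> Im lam = 0.
Proof.
  intros lam [(u & [s Hs] & (k1 & L1 & U1) & Heig) [_ Hbd]].
  destruct (Req_dec (Im lam) 0) as [|Hl]; auto. exfalso.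
  assert (Hl2 : Rabs (Im lam) / 2 > 0) by (apply Rdiv_lt_0_compat; [apply Rabs_pos_lt; auto|lra]).
  assert (Ex : exists k0, lattice nu k0 /\ u k0 <> C0 /\ Im (d k0) <> Im lam).
  { destruct (classic (exists k0, lattice nu k0 /\ u k0 <> C0 /\ Im (d k0) <> Im lam)) as [|NE]; auto.
    exfalso.
    assert (Z0 : forall k, lattice nu k -> Rabs (Im (d k)) <= Rabs (Im lam) / 2 -> u k = C0).
    { intros k Lk Hk. destruct (classic (u k = C0)) as [|Nu]; auto. exfalso. apply NE.
      exists k. repeat split; auto. intro E. rewrite E in Hk.
      pose proof (Rabs_pos_lt _ Hl). lra. }
    destruct Hdecay as (j & Hj & [Hp|Hm]).
    - destruct (Hp _ Hl2) as [N HN].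
      apply U1. apply (unique_cont nu d lam u j 1%Z N); auto.
      intros k Lk Hk. apply Z0; auto. apply (HN (nth j k 0%Z)); auto. lia.
    - destruct (Hm _ Hl2) as [N HN].
      apply U1. apply (unique_cont nu d lam u j (-1)%Z (- N)%Z); auto.
      intros k Lk Hk. apply Z0; auto. apply (HN (nth j k 0%Z)); auto. lia. }
  destruct Ex as (k0 & L0 & U0 & D0).
  destruct (sum_pos _ u s k0 Hs L0) as [Is Rs].
  assert (Pu : 0 < Cmod (u k0)) by (apply Cmod_pos; auto).
  assert (Rsp : 0 < Re s) by nra.
  set (cc := 1 / sqrt (Re s)).
  assert (ccp : 0 < cc) by (unfold cc; apply Rdiv_lt_0_compat; [lra|apply sqrt_lt_R0; lra]).
  assert (cc2 : cc * cc = / Re s).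
  { unfold cc, Rdiv. rewrite !Rmult_1_l, <- Rinv_mult, sqrt_sqrt by lra. reflexivity. }
  set (v := fun k => Cadd (Cmul (RtoC cc) (u k)) (Cmul C0 (u k))).
  assert (Hv : has_sum (lattice nu) (normsq_fun v) (RtoC 1)).
  { apply has_sum_eq with (Cmul (RtoC (cc * cc)) s).
    { rewrite cc2. apply Cx_eq; unfold Cmul, RtoC, Re, Im in *; simpl; rewrite ?Is.
      - field. lra.
      - ring. }
    apply has_sum_ext with (f := fun k => Cmul (RtoC (cc * cc)) (normsq_fun u k)).
    2: apply has_sum_mul; auto.
    intros k _. unfold v, normsq_fun.
    replace (Cadd (Cmul (RtoC cc) (u k)) (Cmul C0 (u k))) with (Cmul (RtoC cc) (u k)) by cxeq.
    rewrite Cmod_mul, Cmod_RtoC, Rabs_pos_eq by lra. cxeq. }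
  assert (Hev : forall k, lattice nu k -> Jop nu d v k = Cmul lam (v k)).
  { intros k Lk. unfold v. rewrite Jop_lin, Heig by auto. cxeq. }
  assert (V0 : v k0 <> C0).
  { intro E. assert (Pv : 0 < Cmod (v k0)).
    { unfold v. replace (Cadd (Cmul (RtoC cc) (u k0)) (Cmul C0 (u k0))) with (Cmul (RtoC cc) (u k0)) by cxeq.
      rewrite Cmod_mul, Cmod_RtoC, Rabs_pos_eq by lra. nra. }
    rewrite E, Cmod_C0 in Pv. lra. }
  destruct (interior nu d lam v k0 L0 Hv Hev V0 D0) as (eps0 & Pe & HI).
  destruct (Hbd eps0 Pe) as (w & Nw & Cw).
  apply Nw, HI; auto.
Qed.
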